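(* Let $k$ be an odd integer with $k\ge 5$, let $D$ be a strong $k$-quasi-transitive digraph with $\mathrm{diam}(D)\ge k+2$, let $u,v\in V(D)$ with $d(u,v)=k+2$, and let $P=x_0x_1\ldots x_{k+2}$ be a shortest $(u,v)$-path with $x_0=u$, $x_{k+2}=v$. Let $O(P)=\{x_1,x_3,\ldots,x_{k+2}\}$, $E(P)=\{x_0,x_2,\ldots,x_{k+1}\}$, $I=\{x\in V(D)\setminus V(P): x\Rightarrow V(P)\}$, $W=\{x\in V(D)\setminus V(P): V(P)\Rightarrow x\}$ and $B=V(D)\setminus(V(P)\cup I\cup W)$. For any $x\in V(D)\setminus V(P)$: (1) Suppose $x\in I$. If $x\rightarrow x_i$ for some $x_i\in E(P)$, then $x\mapsto E(P)$; if $x\rightarrow x_i$ for some $x_i\in O(P)$, then $x\mapsto O(P)$. (2) Suppose $x\in W$. If $x_i\rightarrow x$ for some $x_i\in E(P)$, then $E(P)\mapsto x$; if $x_i\rightarrow x$ for some $x_i\in O(P)$, then $O(P)\mapsto x$. (3) Suppose $x\in B$. If $x$ is adjacent to some vertex of $O(P)$, then either $x$ is adjacent to every vertex of $O(P)$, or there exist $x_s,x_t\in O(P)$ with $3\le t<s\le k$ such that $\{x_s,x_{s+2},\ldots,x_{k+2}\}\mapsto x\mapsto\{x_1,x_3,\ldots,x_t\}$. If $x$ is adjacent to some vertex of $E(P)$, then either $x$ is adjacent to every vertex of $E(P)$, or there exist $x_s,x_t\in E(P)$ with $2\le t<s\le k-1$ such that $\{x_s,x_{s+2},\ldots,x_{k+1}\}\mapsto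 x\mapsto\{x_0,x_2,\ldots,x_t\}$.
   Context: All digraphs are finite, without loops or multiple arcs (opposite arcs allowed). $x\rightarrow y$ means $xy\in A(D)$; $x,y$ are adjacent if $x\rightarrow y$ or $y\rightarrow x$. For disjoint vertex sets $X,Y$ (singletons identified with vertices): $X\rightarrow Y$ means every vertex of $X$ dominates every vertex of $Y$; $X\Rightarrow Y$ means there is no arc from $Y$ to $X$; $X\mapsto Y$ means both $X\rightarrow Y$ and $X\Rightarrow Y$. For $k\ge 2$, $D$ is $k$-quasi-transitive if for every path $x_0x_1\ldots x_k$ of length $k$, $x_0$ and $x_k$ are adjacent. $d(x,y)$ is the length of a shortest $(x,y)$-path, $\mathrm{diam}(D)=\max_{x,y}d(x,y)$. *)

(* Defs.v *)
From mathcomp Require Import all_boot.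
Set Implicit Arguments. Unset Strict Implicit. Unset Printing Implicit Defensive.

(* A digraph on a finite vertex type T is an arc relation a : rel T
   (x -> y iff a x y); loops are excluded by a separate hypothesis. *)
Section Digraph.
Variables (T : finType) (a : rel T).

Definition adj (x y : T) : bool := a x y || a y x.

Definition has_path (x y : T) (n : nat) : Prop :=
  exists s : seq T, [/\ size s = n, uniq (x :: s), path a x s & last x s = y].

Definition dist (x y : T) (n : nat) : Prop :=
  has_path x y n /\ forall m, m < n -> ~ has_path x y m.

Definition diam_ge (n : nat) : Prop :=
  exists x y m, dist x y m /\ n <= m.

Definition strong : Prop := forall x y : T, connect a x y.

Definition k_quasi_transitive (k : nat) : Prop :=
  forall (x0 : T) (s : seq T), size s = k -> uniq (x0 :: s) -> path a x0 s ->
    adj x0 (last x0 s).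

End Digraph.

(* Main.v *)
Require Import Defs.
From mathcomp Require Import all_boot zify.
Set Implicit Arguments. Unset Strict Implicit. Unset Printing Implicit Defensive.


Ltac prep := repeat match goal with
 | H : is_true (leq _ _) |- _ => revert H
 | H : is_true (~~ (@eq_op _ ?a _)) |- _ => let T := type of a in unify T nat; revert H
 | H : @eq ?T _ _ |- _ => unify T nat; revert H
 | H : is_true (leq _ _ && leq _ _) |- _ => revert H
 end.
Ltac lia' := prep; repeat match goal with H : _ |- _ => clear H end; lia.


Lemma uniq_catI (s1 s2 : seq nat) : uniq s1 -> uniq s2 ->
  (forall z, z \in s1 -> z \in s2 -> False) -> uniq (s1 ++ s2).
Proof.
move=> u1 u2 H; rewrite cat_uniq u1 u2 andbT /=; apply/hasPn => z Hz; apply/negP => Hz'.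
exact: (H z Hz' Hz).
Qed.

Lemma uniq_consI (z : nat) s : uniq s -> (z \in s -> False) -> uniq (z :: s).
Proof. by move=> u H; rewrite /= u andbT; apply/negP. Qed.

Ltac memsimp := rewrite ?(mem_cat, mem_iota, in_cons, in_nil, orbF).
Ltac solve_uniq := repeat (apply: uniq_catI || apply: uniq_consI || apply: iota_uniq);
   try (memsimp; lia); try (move=> ?; memsimp; lia).
Ltac solve_all := apply/allP => ?; memsimp; lia.
Ltac solve_all' := rewrite /= ?all_cat /= ?andbT; repeat (apply/andP; split); try lia; try solve_all.

Lemma last_iota i n : last i (iota i.+1 n) = i + n.
Proof. by elim: n i => [|n IH] i /=; [rewrite addn0 | rewrite IH addnS]. Qed.

Lemma core (K : nat) (In Out : nat -> bool) :
 3 <= K ->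
 (forall l, 1 <= l <= K -> Out l -> In (l-1) || Out (l-1)) ->
 (forall l, 2 <= l <= K -> Out l -> In (l-2) || Out (l-2)) ->
 (Out 0 -> In (K-1) || Out (K-1)) ->
 (Out 1 -> In K || Out K) ->
 (forall l, l <= K-1 -> In l -> In l.+1 || Out l.+1) ->
 (forall l, l <= K-2 -> In l -> In l.+2 || Out l.+2) ->
 (In (K-1) -> In 0 || Out 0) ->
 (In K -> In 1 || Out 1) ->
 (forall i j, i <= K -> j <= K -> In i -> Out j -> j <= i.+1) ->
 (exists l, l <= K /\ (In l || Out l)) ->
 (forall l, l <= K -> In l || Out l) \/
 ((forall l, l <= 1 -> Out l && ~~ In l) /\ (forall l, K-1 <= l <= K -> In l && ~~ Out l)).
Proof.
move=> HK H1 H2 H3 H4 H5 H6 H7 H8 HS [l0 [Hl0 Hadl0]].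
have [Hall|Hnall] := boolP (all (fun l => In l || Out l) (iota 0 K.+1)).
  left=> l Hl; move/allP: Hall; apply; rewrite mem_iota; lia'.
right.
have [m /andP[Hm Hnm]] : exists m, (m <= K) && ~~ (In m || Out m).
  move/allPn: Hnall => [m]; rewrite mem_iota => Hm Hn; exists m; rewrite Hn andbT; lia'.
have L1 : forall l, l < m -> ~~ In l.
  suff: forall n l, l < m -> m - l <= n -> ~~ In l by move=> H l Hl; apply: (H (m - l)).
  elim=> [|n IH] l Hl Hn; first lia'.
  apply/negP=> Hin.
  have /orP[Hi1|Ho1] := H5 l ltac:(lia') Hin.
    case: (eqVneq l.+1 m) => [E|NE]; first by move: Hnm; rewrite -E Hi1.
    by move: (IH l.+1 ltac:(lia') ltac:(lia')); rewrite Hi1.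
  case: (eqVneq l.+1 m) => [E|NE]; first by move: Hnm; rewrite -E Ho1 orbT.
  have /orP[Hi2|Ho2] := H6 l ltac:(lia') Hin.
    case: (eqVneq l.+2 m) => [E|NE2]; first by move: Hnm; rewrite -E Hi2.
    by move: (IH l.+2 ltac:(lia') ltac:(lia')); rewrite Hi2.
  have := HS l l.+2 ltac:(lia') ltac:(lia') Hin Ho2; lia'.
have L2 : forall l, m < l <= K -> ~~ Out l.
  suff: forall n l, m < l <= K -> l - m <= n -> ~~ Out l by move=> H l Hl; apply: (H (l - m)).
  elim=> [|n IH] l Hl Hn; first lia'.
  apply/negP=> Ho.
  have /orP[Hi1|Ho1] := H1 l ltac:(lia') Ho.
    case: (eqVneq (l-1) m) => [E|NE]; first by move: Hnm; rewrite -E Hi1.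
    have /orP[Hi2|Ho2] := H2 l ltac:(lia') Ho.
      have := HS (l-2) l ltac:(lia') ltac:(lia') Hi2 Ho; lia'.
    case: (eqVneq (l-2) m) => [E|NE2]; first by move: Hnm; rewrite -E Ho2 orbT.
    by move: (IH (l-2) ltac:(lia') ltac:(lia')); rewrite Ho2.
  case: (eqVneq (l-1) m) => [E|NE]; first by move: Hnm; rewrite -E Ho1 orbT.
  by move: (IH (l-1) ltac:(lia') ltac:(lia')); rewrite Ho1.
have D : forall l l', l' <= l -> l < m -> In l || Out l -> In l' || Out l'.
  elim=> [|l IH] l' Hl' Hlm Had; first by have -> : l' = 0 by lia'.
  case: (eqVneq l' l.+1) => [->//|NE].
  have Ho : Out l.+1 by move: Had (L1 l.+1 Hlm); case: (In l.+1).
  have := H1 l.+1 ltac:(lia') Ho; rewrite subn1 /= => Had'.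
  exact: (IH l' ltac:(lia') ltac:(lia') Had').
have U : forall n l l', m < l -> l <= l' <= K -> l' - l <= n -> In l || Out l -> In l' || Out l'.
  elim=> [|n IH] l l' Hml Hll' Hn Had; first by have -> : l' = l by lia'.
  case: (eqVneq l' l) => [->//|NE].
  have Hi : In l by move: Had (L2 l ltac:(lia')); case: (Out l); rewrite ?orbT ?orbF.
  have Had' := H5 l ltac:(lia') Hi.
  exact: (IH l.+1 l' ltac:(lia') ltac:(lia') ltac:(lia') Had').
have Fin : In 0 || Out 0 -> In 1 || Out 1 -> In (K-1) || Out (K-1) -> In K || Out K ->
    1 < m -> m < K - 1 ->
  ((forall l, l <= 1 -> Out l && ~~ In l) /\ (forall l, K-1 <= l <= K -> In l && ~~ Out l)).
  move=> A0 A1 A2 A3 Hm1 Hm2; split=> l Hl.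
    have Hnin := L1 l ltac:(lia').
    have Ad : In l || Out l by case: l Hl {Hnin} => [|[|]]//.
    by rewrite Hnin andbT; move: Ad Hnin; case: (In l).
  have Hnout := L2 l ltac:(lia').
  have Ad : In l || Out l by case: (eqVneq l K) => [->//|?]; have -> : l = K - 1 by lia'.
  by rewrite Hnout andbT; move: Ad Hnout; case: (Out l); rewrite ?orbT ?orbF.
have Hmn : m != l0 by apply/eqP=> E; move: Hnm; rewrite E Hadl0.
have adm : forall l, l = m -> ~~ (In l || Out l) by move=> l ->.
case: (ltngtP l0 m) => Hlm; last by move: Hmn; rewrite Hlm eqxx.
- have A0 := D l0 0 ltac:(lia') Hlm Hadl0.
  have O0 : Out 0 by move: A0 (L1 0 ltac:(lia')); case: (In 0).
  have A2 := H3 O0.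
  case: (ltnP (K-1) m) => HKm.
    have A1 := D (K-1) 1 ltac:(lia') HKm A2.
    have O1 : Out 1 by move: A1 (L1 1 ltac:(lia')); case: (In 1).
    have := H4 O1; have -> : K = m by lia'. by move: Hnm => /negbTE ->.
  have HKm' : m < K - 1.
    case: (eqVneq m (K-1)) => [E|]; first by move: Hnm; rewrite E A2. lia'.
  have I2 : In (K-1) by move: A2 (L2 (K-1) ltac:(lia')); case: (Out (K-1)); rewrite ?orbT ?orbF.
  have A3 := H5 (K-1) ltac:(lia') I2. have E : (K-1).+1 = K by lia'. rewrite E in A3.
  have I3 : In K by move: A3 (L2 K ltac:(lia')); case: (Out K); rewrite ?orbT ?orbF.
  have A1 := H8 I3.
  have Hm1 : 1 < m.
    case: (eqVneq m 1) => [E1|]; first by move: Hnm; rewrite E1 A1. lia'.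
  exact: Fin.
- have A3 := U (K - l0) l0 K Hlm ltac:(lia') ltac:(lia') Hadl0.
  have I3 : In K by move: A3 (L2 K ltac:(lia')); case: (Out K); rewrite ?orbT ?orbF.
  have A1 := H8 I3.
  case: (eqVneq m 0) => [Em0|Hm0].
    have A2 := U (K-1) 1 (K-1) ltac:(lia') ltac:(lia') ltac:(lia') A1.
    have I2 : In (K-1) by move: A2 (L2 (K-1) ltac:(lia')); case: (Out (K-1)); rewrite ?orbT ?orbF.
    by move: (H7 I2); rewrite -Em0 (negbTE Hnm).
  have Hm1 : 1 < m.
    case: (eqVneq m 1) => [E1|]; first by move: Hnm; rewrite E1 A1. lia'.
  have O1 : Out 1 by move: A1 (L1 1 ltac:(lia')); case: (In 1).
  have A0 := H1 1 ltac:(lia') O1. rewrite subnn in A0.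
  have O0 : Out 0 by move: A0 (L1 0 ltac:(lia')); case: (In 0).
  have A2 := H3 O0.
  have HKm' : m < K - 1.
    case: (eqVneq m (K-1)) => [E|]; first by move: Hnm; rewrite E A2.
    case: (eqVneq m K) => [E|]; first by move: Hnm; rewrite E A3. lia'.
  exact: Fin.
Qed.

Section G.
Variables (k : nat) (R : rel nat).
Hypothesis Hk : 5 <= k.
Hypothesis HQ : forall i0 l, size l = k -> uniq (i0::l) ->
  all (fun n => n <= k+3) (i0::l) -> path R i0 l -> R i0 (last i0 l) || R (last i0 l) i0.
Hypothesis HSP : forall l, uniq (0::l) ->
  all (fun n => n <= k+3) (0::l) -> path R 0 l -> last 0 l = k+2 -> k+2 <= size l.
Hypothesis HP : forall i, i < k+2 -> R i i.+1.

Lemma path_iota i n : i + n <= k+2 -> path R i (iota i.+1 n).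
Proof.
elim: n i => [//|n IH] i H /=; rewrite IH; last lia.
by rewrite HP //; lia.
Qed.

Lemma rule_out2 j b c m : j <= b <= k+2 -> c <= m -> m < j -> R b c ->
  (b - j) + (m - c) + 2 = k -> R (k+3) j -> R (k+3) m || R m (k+3).
Proof.
move=> H1 H2 H3 Rbc Hl Ryj.
have := @HQ (k+3) (j :: iota j.+1 (b-j) ++ c :: iota c.+1 (m-c)).
rewrite /= last_cat /= !last_iota size_cat /= !size_iota.
have -> : c + (m - c) = m by lia.
apply; first lia.
- solve_uniq.
- solve_all'.
rewrite Ryj /= cat_path path_iota; last lia.
rewrite last_iota /=; have -> : j + (b - j) = b by lia.
by rewrite Rbc path_iota //; lia.
Qed.

Lemma rule_out1 j : j <= 3 -> R (k+3) j -> R (k+3) (j + k - 1) || R (j + k - 1) (k+3).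
Proof.
move=> H1 Ryj.
have := @HQ (k+3) (j :: iota j.+1 (k-1)).
rewrite /= !last_iota size_iota.
have -> : j + (k - 1) = j + k - 1 by lia.
apply; first lia.
- solve_uniq.
- solve_all'.
by rewrite Ryj path_iota //; lia.
Qed.

Lemma rule_in2 p b c j : c <= j -> j < p -> p <= b <= k+2 -> R b c ->
  (b - p) + (j - c) + 2 = k -> R j (k+3) -> R (k+3) p || R p (k+3).
Proof.
move=> H1 H2 H3 Rbc Hl Rjy.
set L := iota p.+1 (b-p) ++ c :: iota c.+1 (j-c) ++ [:: k+3].
have S : size L = k by rewrite /L size_cat /= size_cat /= !size_iota; lia.
have U : uniq (p :: L) by rewrite /L; solve_uniq.
have A : all (fun n => n <= k + 3) (p :: L) by rewrite /L; solve_all'.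
have P : path R p L.
  rewrite /L cat_path path_iota; last lia.
  rewrite last_iota /=; have -> : p + (b - p) = b by lia.
  rewrite Rbc cat_path path_iota; last lia.
  rewrite last_iota /=; have -> : c + (j - c) = j by lia.
  by rewrite Rjy.
have := HQ S U A P.
by rewrite /L last_cat /= last_cat /= orbC.
Qed.

Lemma rule_in1 p : p + k - 1 <= k+2 -> R (p + k - 1) (k+3) -> R (k+3) p || R p (k+3).
Proof.
move=> H1 Rjy.
set L := iota p.+1 (k-1) ++ [:: k+3].
have S : size L = k by rewrite /L size_cat /= !size_iota; lia.
have U : uniq (p :: L) by rewrite /L; solve_uniq.
have A : all (fun n => n <= k + 3) (p :: L) by rewrite /L; solve_all'.
have P : path R p L.
  rewrite /L cat_path path_iota; last lia.
  rewrite last_iota /=; have -> : p + (k - 1) = p + k - 1 by lia.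
  by rewrite Rjy.
have := HQ S U A P.
by rewrite /L last_cat /= orbC.
Qed.

Lemma short_xx i j : i + 2 <= j <= k+2 -> R i j -> False.
Proof.
move=> H1 Rij.
have := @HSP (iota 1 i ++ j :: iota j.+1 (k+2-j)).
rewrite size_cat /= !size_iota last_cat /= last_iota.
have E : j + (k + 2 - j) = k + 2 by lia.
rewrite E; have L : last 0 (iota 1 i) = i by case: i {H1 Rij} => [|i]; rewrite // last_iota.
have U : uniq (0 :: iota 1 i ++ j :: iota j.+1 (k + 2 - j)) by solve_uniq.
have A : all (fun n => n <= k + 3) (0 :: iota 1 i ++ j :: iota j.+1 (k + 2 - j)) by solve_all'.
move=> /(_ U A); rewrite cat_path path_iota; last lia.
rewrite L /= Rij path_iota; last lia.
move=> /(_ isT erefl); lia.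
Qed.

Lemma short_y i j : i <= k+2 -> j <= k+2 -> R i (k+3) -> R (k+3) j -> j <= i + 2.
Proof.
move=> H1 H2 Riy Ryj; rewrite leqNgt; apply/negP => H3.
have := @HSP (iota 1 i ++ (k+3) :: j :: iota j.+1 (k+2-j)).
rewrite size_cat /= !size_iota last_cat /= last_iota.
have E : j + (k + 2 - j) = k + 2 by lia.
rewrite E; have L : last 0 (iota 1 i) = i by case: i {H1 Riy H3} => [|i]; rewrite // last_iota.
have U : uniq (0 :: iota 1 i ++ (k+3) :: j :: iota j.+1 (k + 2 - j)) by solve_uniq.
have A : all (fun n => n <= k + 3) (0 :: iota 1 i ++ (k+3) :: j :: iota j.+1 (k + 2 - j)) by solve_all'.
move=> /(_ U A); rewrite cat_path path_iota; last lia.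
rewrite L /= Riy Ryj path_iota; last lia.
move=> /(_ isT erefl); lia.
Qed.

Lemma bk i : i <= 2 -> R (i + k) i.
Proof.
move=> H1.
set L := iota i.+1 k.
have S : size L = k by rewrite /L size_iota.
have U : uniq (i :: L) by rewrite /L; solve_uniq.
have A : all (fun n => n <= k + 3) (i :: L) by rewrite /L; solve_all'.
have P : path R i L by rewrite /L path_iota //; lia.
have := HQ S U A P; rewrite /L last_iota; case/orP => // Hr.
exfalso; apply: (@short_xx i (i + k)) => //; lia.
Qed.

Lemma bk20 : R (k+2) 0.
Proof.
set L := 2 :: iota 3 (k-2) ++ [:: 0].
have S : size L = k by rewrite /L /= size_cat /= size_iota; lia.
have U : uniq ((k+2) :: L) by rewrite /L; solve_uniq.
have A : all (fun n => n <= k + 3) ((k+2) :: L) by rewrite /L; solve_all'.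
have P : path R (k+2) L.
  rewrite /L /= cat_path path_iota; last lia.
  rewrite last_iota; have -> : 2 + (k - 2) = 0 + k by lia.
  have -> : k + 2 = 2 + k by lia.
  by rewrite /= !bk // andbT.
have := HQ S U A P; rewrite /L /= last_cat /=; case/orP => // Hr.
exfalso; apply: (@short_xx 0 (k + 2)) => //; lia.
Qed.

Local Notation ad n := (R (k+3) n || R n (k+3)).

Lemma G_out2 j : 2 <= j <= k+2 -> R (k+3) j -> ad (j-2).
Proof.
move=> H1 Ho.
case: (leqP j k) => Hjk.
  apply: (@rule_out2 j k 0 (j-2)) => //; try lia.
  by have := @bk 0 isT; rewrite add0n.
case: (leqP j (k+1)) => Hjk1.
  have Ej : j = k+1 by lia.
  apply: (@rule_out2 j (k+1) 1 (j-2)) => //; try lia.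
  by have := @bk 1 isT; rewrite addnC.
have Ej : j = k+2 by lia.
apply: (@rule_out2 j (k+2) 2 (j-2)) => //; try lia.
by have := @bk 2 isT; rewrite addnC.
Qed.

Lemma G_out4 j : 4 <= j <= k+2 -> R (k+3) j -> ad (j-4).
Proof.
move=> H1 Ho; apply: (@rule_out2 j (k+2) 0 (j-4)) => //; try lia.
exact: bk20.
Qed.

Lemma G_outW j : j <= 3 -> R (k+3) j -> ad (j+k-1).
Proof. move=> H1 Ho; exact: (@rule_out1 j). Qed.

Lemma G_in2 j : j <= k -> R j (k+3) -> ad (j+2).
Proof.
move=> H1 Hi.
case: (leqP (j+2) k) => Hjk.
  apply: (@rule_in2 (j+2) k 0 j) => //; try lia.
  by have := @bk 0 isT; rewrite add0n.
case: (eqVneq j k) => [Ej|Nj].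
  apply: (@rule_in2 (j+2) (k+2) 2 j) => //; try lia.
  by have := @bk 2 isT; rewrite addnC.
apply: (@rule_in2 (j+2) (k+1) 1 j) => //; try lia.
by have := @bk 1 isT; rewrite addnC.
Qed.

Lemma G_in4 j : j <= k-2 -> R j (k+3) -> ad (j+4).
Proof.
move=> H1 Hi; apply: (@rule_in2 (j+4) (k+2) 0 j) => //; try lia.
exact: bk20.
Qed.

Lemma G_inW j : k-1 <= j <= k+2 -> R j (k+3) -> ad (j+1-k).
Proof.
move=> H1 Hi; apply: (@rule_in1 (j+1-k)); first lia.
by have -> : j + 1 - k + k - 1 = j by lia.
Qed.

Lemma CI (h e : nat) : k = 2*h+1 -> e <= 1 -> (exists l, l <= h.+1 /\ (R (2*l+e) (k+3) || R (k+3) (2*l+e))) ->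
  (forall l, l <= h.+1 -> R (2*l+e) (k+3) || R (k+3) (2*l+e)) \/
  ((forall l, l <= 1 -> R (k+3) (2*l+e) && ~~ R (2*l+e) (k+3)) /\
   (forall l, h.+1 - 1 <= l <= h.+1 -> R (2*l+e) (k+3) && ~~ R (k+3) (2*l+e))).
Proof.
move=> Eh He Hex.
apply: (@core h.+1 (fun l => R (2*l+e) (k+3)) (fun l => R (k+3) (2*l+e))) => //=.
- lia.
- move=> l Hl Ho; rewrite orbC; have := @G_out2 (2*l+e) ltac:(lia) Ho.
  by have -> : 2*l+e-2 = 2*(l-1)+e by lia.
- move=> l Hl Ho; rewrite orbC; have := @G_out4 (2*l+e) ltac:(lia) Ho.
  by have -> : 2*l+e-4 = 2*(l-2)+e by lia.
- move=> Ho; rewrite orbC; have := @G_outW (2*0+e) ltac:(lia) Ho.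
  by have -> : 2*0+e+k-1 = 2*(h.+1-1)+e by lia.
- move=> Ho; rewrite orbC; have := @G_outW (2*1+e) ltac:(lia) Ho.
  by have -> : 2*1+e+k-1 = 2*h.+1+e by lia.
- move=> l Hl Hi; rewrite orbC; have := @G_in2 (2*l+e) ltac:(lia) Hi.
  by have -> : 2*l+e+2 = 2*l.+1+e by lia.
- move=> l Hl Hi; rewrite orbC; have := @G_in4 (2*l+e) ltac:(lia) Hi.
  by have -> : 2*l+e+4 = 2*l.+2+e by lia.
- move=> Hi; rewrite orbC; have := @G_inW (2*(h.+1-1)+e) ltac:(lia) Hi.
  by have -> : 2*(h.+1-1)+e+1-k = 2*0+e by lia.
- move=> Hi; rewrite orbC; have := @G_inW (2*h.+1+e) ltac:(lia) Hi.
  by have -> : 2*h.+1+e+1-k = 2*1+e by lia.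
- move=> i j Hi Hj Ri Ro; have := @short_y (2*i+e) (2*j+e) ltac:(lia) ltac:(lia) Ri Ro; lia.
Qed.
End G.


Lemma par_dec j e : e <= 1 -> odd j = (e == 1) -> exists l, j = 2*l + e.
Proof.
move=> He Ho; exists j./2; have := odd_double_half j; rewrite Ho -muln2.
by case: e He {Ho} => [|[|]] //= _; lia.
Qed.

Lemma odd2 l e : e <= 1 -> odd (2*l + e) = (e == 1).
Proof. by move=> He; rewrite oddD mul2n odd_double; case: e He => [|[|]]. Qed.

Theorem lemma2p10 (T : finType) (a : rel T) (k : nat)
  (Hloop : forall z : T, ~~ a z z)
  (Hk : odd k) (Hk5 : 5 <= k)
  (Hstrong : strong a) (Hqt : k_quasi_transitive a k)
  (Hdiam : diam_ge a (k + 2))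
  (u v : T) (Huv : dist a u v (k + 2))
  (x : nat -> T)
  (Hx0 : x 0 = u) (Hxv : x (k + 2) = v)
  (Harc : forall i, i < k + 2 -> a (x i) (x i.+1))
  (Hinj : forall i j, i <= k + 2 -> j <= k + 2 -> x i = x j -> i = j) :
  forall y : T, (forall i, i <= k + 2 -> y <> x i) ->
  (* (1) y in I *)
  ((forall i, i <= k + 2 -> ~~ a (x i) y) ->
     ((exists i, [/\ i <= k + 2, ~~ odd i & a y (x i)]) ->
        forall j, j <= k + 2 -> ~~ odd j -> a y (x j) && ~~ a (x j) y) /\
     ((exists i, [/\ i <= k + 2, odd i & a y (x i)]) ->
        forall j, j <= k + 2 -> odd j -> a y (x j) && ~~ a (x j) y)) /\
  (* (2) y in W *)
  ((forall i, i <= k + 2 -> ~~ a y (x i)) ->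
     ((exists i, [/\ i <= k + 2, ~~ odd i & a (x i) y]) ->
        forall j, j <= k + 2 -> ~~ odd j -> a (x j) y && ~~ a y (x j)) /\
     ((exists i, [/\ i <= k + 2, odd i & a (x i) y]) ->
        forall j, j <= k + 2 -> odd j -> a (x j) y && ~~ a y (x j))) /\
  (* (3) y in B *)
  ((exists i, i <= k + 2 /\ a (x i) y) ->
   (exists i, i <= k + 2 /\ a y (x i)) ->
     ((exists i, [/\ i <= k + 2, odd i & adj a y (x i)]) ->
        (forall j, j <= k + 2 -> odd j -> adj a y (x j)) \/
        (exists s t, [/\ odd s, odd t, 3 <= t, t < s & s <= k] /\
           (forall j, s <= j <= k + 2 -> odd j -> a (x j) y && ~~ a y (x j)) /\
           (forall j, 1 <= j <= t -> odd j -> a y (x j) && ~~ a (x j) y))) /\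
     ((exists i, [/\ i <= k + 2, ~~ odd i & adj a y (x i)]) ->
        (forall j, j <= k + 2 -> ~~ odd j -> adj a y (x j)) \/
        (exists s t, [/\ ~~ odd s, ~~ odd t, 2 <= t, t < s & s <= k - 1] /\
           (forall j, s <= j <= k + 1 -> ~~ odd j -> a (x j) y && ~~ a y (x j)) /\
           (forall j, j <= t -> ~~ odd j -> a y (x j) && ~~ a (x j) y)))).
Proof.
move=> y Hy.
have [h Eh] : exists h, k = 2*h + 1 by apply: par_dec => //; rewrite Hk.
pose X := fun n => if n <= k+2 then x n else y.
have XE : forall i, i <= k+2 -> X i = x i by move=> i Hi; rewrite /X Hi.
have XN : X (k+3) = y by rewrite /X; case: leqP => [H|//]; exfalso; lia'.
have Xinj : forall i j, i <= k+3 -> j <= k+3 -> X i = X j -> i = j.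
  move=> i j Hi Hj; rewrite /X; case: leqP => Hi'; case: leqP => Hj'.
  - exact: Hinj.
  - by move=> E; case: (Hy i Hi'); rewrite E.
  - by move=> E; case: (Hy j Hj'); rewrite E.
  - move=> _; lia'.
pose R : rel nat := fun i j => a (X i) (X j).
have HQ : forall i0 l, size l = k -> uniq (i0::l) -> all (fun n => n <= k+3) (i0::l) ->
    path R i0 l -> R i0 (last i0 l) || R (last i0 l) i0.
  move=> i0 l Hs Hu Ha Hp.
  have := Hqt (X i0) (map X l); rewrite size_map last_map; apply => //.
  - rewrite -map_cons map_inj_in_uniq // => p q Hp' Hq'; apply: Xinj.
    + exact: (allP Ha p Hp').
    + exact: (allP Ha q Hq').
  - by rewrite path_map.
have Xu : X 0 = u by rewrite XE // Hx0.
have HSP : forall l, uniq (0::l) -> all (fun n => n <= k+3) (0::l) -> path R 0 l ->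
    last 0 l = k+2 -> k+2 <= size l.
  move=> l Hu Ha Hp Hl; rewrite leqNgt; apply/negP => Hlt.
  apply: (Huv.2 _ Hlt); exists (map X l); split.
  - by rewrite size_map.
  - rewrite -Xu -map_cons map_inj_in_uniq // => p q Hp' Hq'; apply: Xinj.
    + exact: (allP Ha p Hp').
    + exact: (allP Ha q Hq').
  - by rewrite -Xu path_map.
  - by rewrite -Xu last_map Hl XE // Hxv.
have HP : forall i, i < k+2 -> R i i.+1.
  move=> i Hi; have E1 := XE i ltac:(lia'); have E2 := XE i.+1 ltac:(lia').
  by rewrite /R E1 E2; apply: Harc.
have CIe := @CI k R Hk5 HQ HSP HP h.
have RI : forall i, i <= k+2 -> R i (k+3) = a (x i) y by move=> i Hi; rewrite /R XN XE.
have RO : forall i, i <= k+2 -> R (k+3) i = a y (x i) by move=> i Hi; rewrite /R XN XE.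
have Cv : forall e, e <= 1 -> (exists i, [/\ i <= k + 2, odd i = (e == 1) & adj a y (x i)]) ->
   (forall j, j <= k+2 -> odd j = (e == 1) -> adj a y (x j)) \/
   ((forall j, j <= 2 + e -> odd j = (e == 1) -> a y (x j) && ~~ a (x j) y) /\
    (forall j, k - 1 + e <= j <= k+2 -> odd j = (e == 1) -> a (x j) y && ~~ a y (x j))).
  move=> e He [i [Hi Hoi Hadj]].
  have [l0 El0] := par_dec He Hoi.
  have := CIe e Eh He; case.
  - exists l0; split; first lia'.
    by rewrite -El0 RI // RO // orbC.
  - move=> Hall; left=> j Hj Hoj.
    have [l El] := par_dec He Hoj.
    have := Hall l ltac:(lia'); by rewrite -El RI // RO // orbC.
  - move=> [Hlo Hhi]; right; split.
    + move=> j Hj Hoj; have [l El] := par_dec He Hoj.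
      have := Hlo l ltac:(lia'); by rewrite -El RI ?RO //; lia'.
    + move=> j Hj Hoj; have [l El] := par_dec He Hoj.
      have := Hhi l ltac:(lia'); by rewrite -El RI ?RO //; lia'.
have Ok1 : odd (k+1) = (0 == 1).
  have -> : k+1 = 2*h.+1 + 0 by lia'.
  by rewrite odd2.
have Ok2 : odd (k+2) = (1 == 1).
  have -> : k+2 = 2*h.+1 + 1 by lia'.
  by rewrite odd2.
have Okm1 : odd (k-1) = (0 == 1).
  have -> : k-1 = 2*h + 0 by lia'.
  by rewrite odd2.
have Ok : odd k = (1 == 1) by rewrite Hk.
have Ev : forall i, ~~ odd i -> odd i = (0 == 1) by move=> i /negbTE ->.
have Od : forall i, odd i -> odd i = (1 == 1) by move=> i ->.
split; [|split].
- move=> Hno; split.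
  + move=> [i [Hi Hoi Hai]] j Hj Hoj.
    have := Cv 0 isT; case.
    * by exists i; split; [exact: Hi | exact: Ev | rewrite /adj Hai ?orbT].
    * move=> Hall; have := Hall j Hj (Ev j Hoj); rewrite /adj (negbTE (Hno j Hj)) orbF => ->.
      by [].
    * move=> [_ Hhi]; have := Hhi (k+1) ltac:(lia') Ok1.
      by rewrite (negbTE (Hno (k+1) ltac:(lia'))).
  + move=> [i [Hi Hoi Hai]] j Hj Hoj.
    have := Cv 1 isT; case.
    * by exists i; split; [exact: Hi | exact: Od | rewrite /adj Hai ?orbT].
    * move=> Hall; have := Hall j Hj (Od j Hoj); rewrite /adj (negbTE (Hno j Hj)) orbF => ->.
      by [].
    * move=> [_ Hhi]; have := Hhi (k+2) ltac:(lia') Ok2.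
      by rewrite (negbTE (Hno (k+2) (leqnn _))).
- move=> Hno; split.
  + move=> [i [Hi Hoi Hai]] j Hj Hoj.
    have := Cv 0 isT; case.
    * by exists i; split; [exact: Hi | exact: Ev | rewrite /adj Hai ?orbT].
    * move=> Hall; have := Hall j Hj (Ev j Hoj); rewrite /adj (negbTE (Hno j Hj)) /= => ->.
      by [].
    * move=> [Hlo _]; have := Hlo 0 isT erefl.
      by rewrite (negbTE (Hno 0 isT)).
  + move=> [i [Hi Hoi Hai]] j Hj Hoj.
    have := Cv 1 isT; case.
    * by exists i; split; [exact: Hi | exact: Od | rewrite /adj Hai ?orbT].
    * move=> Hall; have := Hall j Hj (Od j Hoj); rewrite /adj (negbTE (Hno j Hj)) /= => ->.
      by [].
    * move=> [Hlo _]; have := Hlo 1 isT erefl.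
      by rewrite (negbTE (Hno 1 ltac:(lia'))).
- move=> _ _; split.
  + move=> [i [Hi Hoi Hai]].
    have := Cv 1 isT; case.
    * by exists i; split; [exact: Hi | exact: Od | exact: Hai].
    * move=> Hall; left=> j Hj Hoj; exact: Hall j Hj (Od j Hoj).
    * move=> [Hlo Hhi]; right; exists k, 3; split.
      - split; [by rewrite Hk | by [] | lia' ..].
      split.
      - move=> j Hj Hoj; apply: Hhi (Od j Hoj); lia'.
      - move=> j Hj Hoj; apply: Hlo (Od j Hoj); lia'.
  + move=> [i [Hi Hoi Hai]].
    have := Cv 0 isT; case.
    * by exists i; split; [exact: Hi | exact: Ev | exact: Hai].
    * move=> Hall; left=> j Hj Hoj; exact: Hall j Hj (Ev j Hoj).
    * move=> [Hlo Hhi]; right; exists (k-1), 2; split.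
      - split; [by rewrite Okm1 | by [] | lia' ..].
      split.
      - move=> j Hj Hoj; apply: Hhi (Ev j Hoj); lia'.
      - move=> j Hj Hoj; apply: Hlo (Ev j Hoj); lia'.
Qed.
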